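(* Let $(M,\circ)$ be a fuzzy $\Gamma$-hypersemigroup. Then for all $a,b\in M$, $\alpha,\beta\in\Gamma$ and all fuzzy subsets $\mu,\nu,\delta$ of $M$: (i) $a\circ\alpha\circ(b\circ\beta\circ\mu)=(a\circ\alpha\circ b)\circ\beta\circ\mu$; (ii) $a\circ\alpha\circ(\mu\circ\beta\circ b)=(a\circ\alpha\circ\mu)\circ\beta\circ b$; (iii) $\mu\circ\alpha\circ(a\circ\beta\circ b)=(\mu\circ\alpha\circ a)\circ\beta\circ b$; (iv) $\mu\circ\alpha\circ(a\circ\beta\circ\nu)=(\mu\circ\alpha\circ a)\circ\beta\circ\nu$; (v) $a\circ\alpha\circ(\mu\circ\beta\circ\nu)=(a\circ\alpha\circ\mu)\circ\beta\circ\nu$; (vi) $\mu\circ\alpha\circ(\nu\circ\beta\circ a)=(\mu\circ\alpha\circ\nu)\circ\beta\circ a$; (vii) $\mu\circ\alpha\circ(\nu\circ\beta\circ\delta)=(\mu\circ\alpha\circ\nu)\circ\beta\circ\delta$.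
   Context: $M,\Gamma$ are nonempty sets; a fuzzy subset of $M$ is a map $M\to[0,1]$. A fuzzy $\Gamma$-hyperoperation assigns to each $(a,\gamma,b)\in M\times\Gamma\times M$ a fuzzy subset $a\circ\gamma\circ b$. For $a\in M$ and fuzzy $\mu$: $(a\circ\gamma\circ\mu)(r)=\bigvee_{t\in M}((a\circ\gamma\circ t)(r)\wedge\mu(t))$ if $\mu\ne0$, else $0$; $(\mu\circ\gamma\circ a)(r)=\bigvee_{t\in M}(\mu(t)\wedge(t\circ\gamma\circ a)(r))$ if $\mu\ne0$, else $0$. For fuzzy $\mu,\nu$: $(\mu\circ\gamma\circ\nu)(t)=\bigvee_{p,q\in M}(\mu(p)\wedge(p\circ\gamma\circ q)(t)\wedge\nu(q))$. Since $a\circ\alpha\circ b$ is itself a fuzzy subset, expressions like $(a\circ\alpha\circ b)\circ\beta\circ\mu$ use these definitions. $(M,\circ)$ is a fuzzy $\Gamma$-hypersemigroup if $(a\circ\alpha\circ b)\circ\beta\circ c=a\circ\alpha\circ(b\circ\beta\circ c)$ for all $a,b,c\in M$, $\alpha,\beta\in\Gamma$. *)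

(* Defs.v *)
From HB Require Import structures.
From mathcomp Require Import all_boot all_order all_algebra.
From mathcomp Require Import boolp classical_sets reals.
Set Implicit Arguments. Unset Strict Implicit. Unset Printing Implicit Defensive.
Import Order.TTheory GRing.Theory Num.Theory.
Local Open Scope ring_scope.
Local Open Scope classical_set_scope.

Section Fuzzy.
Variables (R : realType) (M G : Type).

Definition is_fuzzy (mu : M -> R) : Prop := forall x, 0 <= mu x <= 1.

Definition fuzzy_Gamma_hyperop (h : M -> G -> M -> M -> R) : Prop :=
  forall a g b, is_fuzzy (h a g b).

Definition el_fz (h : M -> G -> M -> M -> R) (a : M) (g : G) (mu : M -> R)
  : M -> R := fun r =>
  if `[< mu = (fun _ => 0) >] then 0
  else sup [set Num.min (h a g t r) (mu t) | t in [set: M]].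

Definition fz_el (h : M -> G -> M -> M -> R) (mu : M -> R) (g : G) (a : M)
  : M -> R := fun r =>
  if `[< mu = (fun _ => 0) >] then 0
  else sup [set Num.min (mu t) (h t g a r) | t in [set: M]].

Definition fz_fz (h : M -> G -> M -> M -> R) (mu : M -> R) (g : G) (nu : M -> R)
  : M -> R := fun t =>
  sup [set Num.min (Num.min (mu pq.1) (h pq.1 g pq.2 t)) (nu pq.2)
      | pq in [set: M * M]].

Definition fuzzy_Gamma_hypersemigroup (h : M -> G -> M -> M -> R) : Prop :=
  fuzzy_Gamma_hyperop h /\
  forall (a b c : M) (al be : G),
    fz_el h (h a al b) be c = el_fz h a al (h b be c).

End Fuzzy.

(* Main.v *)
Require Import Defs.
From HB Require Import structures.
From mathcomp Require Import all_boot all_order all_algebra.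
From mathcomp Require Import boolp classical_sets reals.
Set Implicit Arguments. Unset Strict Implicit. Unset Printing Implicit Defensive.
Import Order.TTheory GRing.Theory Num.Theory.
Local Open Scope ring_scope.
Local Open Scope classical_set_scope.

Section Sup.
Variable R : realType.
Definition S {T : Type} (f : T -> R) : R := sup [set f t | t in [set: T]].

Lemma S_le T (t0 : T) (f : T -> R) z : (forall t, f t <= z) -> S f <= z.
Proof. move=> H; apply: ge_sup; first by exists (f t0), t0.
by move=> _ [t _ <-]. Qed.

Lemma le_S T (f : T -> R) t : (forall t, f t <= 1) -> f t <= S f.
Proof. move=> H; apply: ub_le_sup; last by exists t.
by exists 1 => _ [s _ <-]. Qed.

Lemma eq_S T (f g : T -> R) : (forall t, f t = g t) -> S f = S g.
Proof. by move=> H; congr S; apply: funext. Qed.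

Lemma S_minl T (t0 : T) (f : T -> R) x : (forall t, f t <= 1) ->
  Num.min x (S f) = S (fun t => Num.min x (f t)).
Proof.
move=> H.
have Hg : forall t, Num.min x (f t) <= 1 by move=> t; rewrite ge_min H orbT.
apply: le_anti; apply/andP; split; last first.
  apply: S_le => // t; rewrite le_min ge_min lexx /= ge_min (le_S _ H) orbT //.
rewrite leNgt; apply/negP => Hlt.
have Hft : forall t, f t <= S (fun t => Num.min x (f t)).
  move=> t; have := @le_S _ (fun t => Num.min x (f t)) t Hg; rewrite /=.
  have [hx|hx] := leP x (f t).
    move=> H2; exfalso; move: Hlt; rewrite lt_min => /andP[H1 _].
    by move: (lt_le_trans H1 H2); rewrite ltxx.
  by [].
have := S_le t0 Hft; move: Hlt; rewrite lt_min => /andP[_ H1] H2.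
by move: (lt_le_trans H1 H2); rewrite ltxx.
Qed.

Lemma S_minr T (t0 : T) (f : T -> R) x : (forall t, f t <= 1) ->
  Num.min (S f) x = S (fun t => Num.min (f t) x).
Proof. move=> H; rewrite minC (@S_minl _ t0 f x H); apply: eq_S => t; exact: minC. Qed.

Lemma S_le1 T (t0 : T) (f : T -> R) : (forall t, f t <= 1) -> S f <= 1.
Proof. exact: S_le. Qed.

Lemma fubini1 T U (t0 : T) (u0 : U) (f : T * U -> R) : (forall p, f p <= 1) ->
  S f = S (fun t => S (fun u => f (t, u))).
Proof.
move=> H; have Hi : forall t, S (fun u => f (t, u)) <= 1 by move=> t; apply: S_le1.
apply: le_anti; apply/andP; split.
  apply: S_le => // -[t u]; apply: le_trans (le_S t Hi).
  exact: (le_S u (fun u => H (t, u))).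
apply: S_le => // t; apply: S_le => // u; exact: (le_S (t, u) H).
Qed.

Lemma fubini2 T U (t0 : T) (u0 : U) (f : T * U -> R) : (forall p, f p <= 1) ->
  S f = S (fun u => S (fun t => f (t, u))).
Proof.
move=> H; have Hi : forall u, S (fun t => f (t, u)) <= 1 by move=> u; apply: S_le1.
apply: le_anti; apply/andP; split.
  apply: S_le => // -[t u]; apply: le_trans (le_S u Hi).
  exact: (le_S t (fun t => H (t, u))).
apply: S_le => // u; apply: S_le => // t; exact: (le_S (t, u) H).
Qed.

Lemma SS_swap T U (t0 : T) (u0 : U) (f : T -> U -> R) : (forall t u, f t u <= 1) ->
  S (fun t => S (fun u => f t u)) = S (fun u => S (fun t => f t u)).
Proof.
move=> H; rewrite -(@fubini1 _ _ t0 u0 (fun p => f p.1 p.2)); last by move=> [].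
by rewrite (@fubini2 _ _ t0 u0 (fun p => f p.1 p.2)) //; move=> [].
Qed.

Lemma S_const T (t0 : T) (c : R) : c <= 1 -> S (fun _ : T => c) = c.
Proof. move=> hc; apply: le_anti; rewrite (S_le t0) //=.
exact: (@le_S _ (fun _ : T => c) t0).
Qed.
Lemma min_le1l (x y : R) : x <= 1 -> Num.min x y <= 1.
Proof. by move=> h; rewrite ge_min h. Qed.
Lemma min_le1r (x y : R) : y <= 1 -> Num.min x y <= 1.
Proof. by move=> h; rewrite ge_min h orbT. Qed.
Lemma S01 T (t0 : T) (f : T -> R) : (forall t, 0 <= f t <= 1) -> 0 <= S f <= 1.
Proof. move=> H; rewrite (S_le t0) ?andbT; last by move=> t; case/andP: (H t).
apply: le_trans (@le_S _ f t0 _); first by case/andP: (H t0).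
by move=> t; case/andP: (H t).
Qed.
Lemma min01 (x y : R) : 0 <= x <= 1 -> 0 <= y <= 1 -> 0 <= Num.min x y <= 1.
Proof. move=> /andP[a b] /andP[c d]; by rewrite le_min a c ge_min b. Qed.
End Sup.

Ltac minac := apply/le_anti; rewrite ?(le_min, ge_min, lexx, orbT, orTb) //=.

Section Main.
Variables (R : realType) (M G : Type) (m0 : M) (h : M -> G -> M -> M -> R).
Hypothesis hf : forall a g b x, 0 <= h a g b x <= 1.
Lemma h1 a g b x : h a g b x <= 1. Proof. by case/andP: (hf a g b x). Qed.
Lemma h0 a g b x : 0 <= h a g b x. Proof. by case/andP: (hf a g b x). Qed.
Lemma fz1 (mu : M -> R) x : is_fuzzy mu -> mu x <= 1. Proof. by move=> H; case/andP: (H x). Qed.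

Ltac bnd := repeat first [ progress intros | apply: min_le1l | apply: (@S_le1 _ _ m0) | apply: h1
   | match goal with H : is_fuzzy ?mu |- _ => exact: (fz1 _ H) end ].

Definition E a g (mu : M -> R) := fun r => S (fun t => Num.min (h a g t r) (mu t)).
Definition F (mu : M -> R) g a := fun r => S (fun t => Num.min (mu t) (h t g a r)).

Lemma el_fzE a g mu : is_fuzzy mu -> el_fz h a g mu = E a g mu.
Proof.
move=> Hmu; apply: funext => r; rewrite /el_fz /E; case: asboolP => [->|_] //.
rewrite (@eq_S _ _ _ (fun _ => 0)) ?S_const //; move=> t; exact: min_r (h0 _ _ _ _).
Qed.
Lemma fz_elE a g mu : is_fuzzy mu -> fz_el h mu g a = F mu g a.
Proof.
move=> Hmu; apply: funext => r; rewrite /fz_el /F; case: asboolP => [->|_] //.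
rewrite (@eq_S _ _ _ (fun _ => 0)) ?S_const //; move=> t; exact: min_l (h0 _ _ _ _).
Qed.
Lemma fz_fzE mu g nu r : is_fuzzy mu -> fz_fz h mu g nu r =
   S (fun p => S (fun q => Num.min (Num.min (mu p) (h p g q r)) (nu q))).
Proof.
move=> Hmu; apply: (@fubini1 _ _ _ m0 m0 (fun pq => Num.min (Num.min (mu pq.1) (h pq.1 g pq.2 r)) (nu pq.2))); bnd.
Qed.
Lemma E_fz a g mu : is_fuzzy mu -> is_fuzzy (E a g mu).
Proof. move=> Hmu r; apply: (S01 m0) => t; exact: min01. Qed.
Lemma F_fz a g mu : is_fuzzy mu -> is_fuzzy (F mu g a).
Proof. move=> Hmu r; apply: (S01 m0) => t; exact: min01. Qed.
Lemma FF_fz g mu nu : is_fuzzy mu -> is_fuzzy nu -> is_fuzzy (fz_fz h mu g nu).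
Proof. move=> Hmu Hnu r; apply: (S01 (m0, m0)) => t; apply: min01 => //; exact: min01. Qed.
Lemma h_fz a g b : is_fuzzy (h a g b). Proof. by move=> x. Qed.

Hypothesis Hsg : fuzzy_Gamma_hypersemigroup h.
Lemma Hass a b c al be r : F (h a al b) be c r = E a al (h b be c) r.
Proof. by case: Hsg => _ H; rewrite -fz_elE ?H ?el_fzE //; exact: h_fz. Qed.

Lemma HassX x a b c al be r :
  S (fun p => Num.min x (Num.min (h a al b p) (h p be c r))) =
  S (fun t => Num.min x (Num.min (h a al t r) (h b be c t))).
Proof.
have e := congr1 (Num.min x) (Hass a b c al be r); rewrite /F /E in e.
rewrite (@S_minl _ _ m0) in e; last by bnd.
rewrite (@S_minl _ _ m0) in e; last by bnd.
exact e.
Qed.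

Variables (a b : M) (al be : G) (mu nu de : M -> R).
Hypotheses (Hmu : is_fuzzy mu) (Hnu : is_fuzzy nu) (Hde : is_fuzzy de).

Lemma p1 : el_fz h a al (el_fz h b be mu) = fz_fz h (h a al b) be mu.
Proof.
rewrite (el_fzE _ _ Hmu) el_fzE; last exact: E_fz.
apply: funext => r; rewrite fz_fzE; last exact: h_fz.
rewrite /E.
under eq_S => t.
  rewrite (@S_minl _ _ m0); first over.
  bnd.
rewrite [RHS](@SS_swap _ _ _ m0 m0); last bnd.
under [RHS]eq_S => q do under eq_S => p do rewrite minC.
under [RHS]eq_S => q do rewrite HassX.
rewrite [RHS](@SS_swap _ _ _ m0 m0); last bnd.
apply: eq_S => t; apply: eq_S => s; minac.
Qed.

Lemma ac1 (X m Y : R) : Num.min (Num.min X m) Y = Num.min m (Num.min X Y). Proof. minac. Qed.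
Lemma ac2 (m A B n : R) : Num.min (Num.min m A) (Num.min B n) = Num.min (Num.min m n) (Num.min A B). Proof. minac. Qed.
Lemma ac3 (A m B n : R) : Num.min A (Num.min (Num.min m B) n) = Num.min (Num.min m n) (Num.min A B). Proof. minac. Qed.
Lemma ac5 (m A n B d : R) : Num.min (Num.min m A) (Num.min (Num.min n B) d) = Num.min (Num.min m (Num.min n d)) (Num.min A B). Proof. minac. Qed.

Lemma p2 : el_fz h a al (fz_el h mu be b) = fz_el h (el_fz h a al mu) be b.
Proof.
rewrite (fz_elE _ _ Hmu) (el_fzE _ _ Hmu) el_fzE; last exact: F_fz.
rewrite fz_elE; last exact: E_fz.
apply: funext => r; rewrite /E /F.
under eq_S => t.
  rewrite (@S_minl _ _ m0); first over.
  bnd.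
under [RHS]eq_S => p.
  rewrite (@S_minr _ _ m0); first over.
  bnd.
rewrite [RHS](@SS_swap _ _ _ m0 m0); last bnd.
under [RHS]eq_S => q do under eq_S => p do rewrite ac1.
under [RHS]eq_S => q do rewrite HassX.
rewrite [RHS](@SS_swap _ _ _ m0 m0); last bnd.
apply: eq_S => t; apply: eq_S => s; minac.
Qed.

Lemma p3 : fz_fz h mu al (h a be b) = fz_el h (fz_el h mu al a) be b.
Proof.
rewrite (fz_elE _ _ Hmu) fz_elE; last exact: F_fz.
apply: funext => r; rewrite fz_fzE // /F.
under eq_S => p do under eq_S => q do rewrite -minA.
under eq_S => p do rewrite -HassX.
under [RHS]eq_S => q.
  rewrite (@S_minr _ _ m0); first over.
  bnd.
rewrite [RHS](@SS_swap _ _ _ m0 m0); last bnd.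
apply: eq_S => t; apply: eq_S => s; minac.
Qed.

Lemma p4 : fz_fz h mu al (el_fz h a be nu) = fz_fz h (fz_el h mu al a) be nu.
Proof.
rewrite (fz_elE _ _ Hmu) (el_fzE _ _ Hnu).
apply: funext => r; rewrite fz_fzE // fz_fzE; last exact: F_fz.
rewrite /E /F.
under eq_S => p.
  under eq_S => q.
    rewrite (@S_minl _ _ m0); first over.
    bnd.
  over.
under eq_S => p.
  rewrite (@SS_swap _ _ _ m0 m0); first over.
  bnd.
under eq_S => p do under eq_S => s do under eq_S => q do rewrite ac2.
under eq_S => p do under eq_S => s do rewrite -HassX.
under [RHS]eq_S => q.
  under eq_S => s.
    rewrite (@S_minr _ _ m0); first over.
    bnd.
  over.
under [RHS]eq_S => q.
  under eq_S => s.
    rewrite (@S_minr _ _ m0); first over.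
    bnd.
  over.
under [RHS]eq_S => q.
  rewrite (@SS_swap _ _ _ m0 m0); first over.
  bnd.
rewrite [RHS](@SS_swap _ _ _ m0 m0); last bnd.
under [RHS]eq_S => p.
  rewrite (@SS_swap _ _ _ m0 m0); first over.
  bnd.
apply: eq_S => p; apply: eq_S => s; apply: eq_S => q; minac.
Qed.

Lemma p5 : el_fz h a al (fz_fz h mu be nu) = fz_fz h (el_fz h a al mu) be nu.
Proof.
rewrite (el_fzE _ _ Hmu) el_fzE; last exact: FF_fz.
apply: funext => r; rewrite fz_fzE; last exact: E_fz.
rewrite /E.
under eq_S => t.
  rewrite fz_fzE; first over.
  exact: Hmu.
under eq_S => t.
  rewrite (@S_minl _ _ m0); first over.
  bnd.
under eq_S => t.
  under eq_S => p.
    rewrite (@S_minl _ _ m0); first over.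
    bnd.
  over.
rewrite (@SS_swap _ _ _ m0 m0); last bnd.
under eq_S => p.
  rewrite (@SS_swap _ _ _ m0 m0); first over.
  bnd.
under eq_S => p do under eq_S => q do under eq_S => t do rewrite ac3.
under eq_S => p do under eq_S => q do rewrite -HassX.
under [RHS]eq_S => t.
  under eq_S => q.
    rewrite (@S_minr _ _ m0); first over.
    bnd.
  over.
under [RHS]eq_S => t.
  under eq_S => q.
    rewrite (@S_minr _ _ m0); first over.
    bnd.
  over.
under [RHS]eq_S => t.
  rewrite (@SS_swap _ _ _ m0 m0); first over.
  bnd.
rewrite [RHS](@SS_swap _ _ _ m0 m0); last bnd.
under [RHS]eq_S => p.
  rewrite (@SS_swap _ _ _ m0 m0); first over.
  bnd.
apply: eq_S => p; apply: eq_S => q; apply: eq_S => t; minac.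
Qed.

Lemma p6 : fz_fz h mu al (fz_el h nu be a) = fz_el h (fz_fz h mu al nu) be a.
Proof.
rewrite (fz_elE _ _ Hnu) fz_elE; last exact: FF_fz.
apply: funext => r; rewrite fz_fzE // /F.
under eq_S => p.
  under eq_S => q.
    rewrite (@S_minl _ _ m0); first over.
    bnd.
  over.
under eq_S => p.
  rewrite (@SS_swap _ _ _ m0 m0); first over.
  bnd.
under eq_S => p do under eq_S => s do under eq_S => q do rewrite minACA.
under eq_S => p do under eq_S => s do rewrite -HassX.
under [RHS]eq_S => q.
  rewrite fz_fzE; first over.
  exact: Hmu.
under [RHS]eq_S => q.
  rewrite (@S_minr _ _ m0); first over.
  bnd.
under [RHS]eq_S => q.
  under eq_S => p.
    rewrite (@S_minr _ _ m0); first over.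
    bnd.
  over.
rewrite [RHS](@SS_swap _ _ _ m0 m0); last bnd.
under [RHS]eq_S => p.
  rewrite (@SS_swap _ _ _ m0 m0); first over.
  bnd.
apply: eq_S => p; apply: eq_S => s; apply: eq_S => q; minac.
Qed.

Lemma p7 : fz_fz h mu al (fz_fz h nu be de) = fz_fz h (fz_fz h mu al nu) be de.
Proof.
apply: funext => r; rewrite fz_fzE // fz_fzE; last exact: FF_fz.
under eq_S => p.
  under eq_S => q.
    rewrite fz_fzE; first over.
    exact: Hnu.
  over.
under eq_S => p.
  under eq_S => q.
    rewrite (@S_minl _ _ m0); first over.
    bnd.
  over.
under eq_S => p.
  under eq_S => q.
    under eq_S => s.
      rewrite (@S_minl _ _ m0); first over.
      bnd.
    over.
  over.
under eq_S => p.
  rewrite (@SS_swap _ _ _ m0 m0); first over.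
  bnd.
under eq_S => p.
  under eq_S => s.
    rewrite (@SS_swap _ _ _ m0 m0); first over.
    bnd.
  over.
under eq_S => p do under eq_S => s do under eq_S => t do under eq_S => q do rewrite ac5.
under eq_S => p do under eq_S => s do under eq_S => t do rewrite -HassX.
under [RHS]eq_S => q.
  under eq_S => t.
    rewrite fz_fzE; first over.
    exact: Hmu.
  over.
under [RHS]eq_S => q.
  under eq_S => t.
    rewrite (@S_minr _ _ m0); first over.
    bnd.
  over.
under [RHS]eq_S => q.
  under eq_S => t.
    rewrite (@S_minr _ _ m0); first over.
    bnd.
  over.
under [RHS]eq_S => q.
  under eq_S => t.
    under eq_S => p.
      rewrite (@S_minr _ _ m0); first over.
      bnd.
    over.
  over.
under [RHS]eq_S => q.
  under eq_S => t.
    under eq_S => p.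
      rewrite (@S_minr _ _ m0); first over.
      bnd.
    over.
  over.
(* order q t p s -> p s t q *)
under [RHS]eq_S => q.
  rewrite (@SS_swap _ _ _ m0 m0); first over.
  bnd.
rewrite [RHS](@SS_swap _ _ _ m0 m0); last bnd.
under [RHS]eq_S => p.
  under eq_S => q.
    rewrite (@SS_swap _ _ _ m0 m0); first over.
    bnd.
  over.
under [RHS]eq_S => p.
  rewrite (@SS_swap _ _ _ m0 m0); first over.
  bnd.
under [RHS]eq_S => p.
  under eq_S => s.
    rewrite (@SS_swap _ _ _ m0 m0); first over.
    bnd.
  over.
apply: eq_S => p; apply: eq_S => s; apply: eq_S => t; apply: eq_S => q; minac.
Qed.
End Main.

Unset Implicit Arguments.
Close Scope classical_set_scope.

Theorem theorem3p14 (R : realType) (M G : Type) (m0 : M) (g0 : G)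
  (h : M -> G -> M -> M -> R) :
  fuzzy_Gamma_hypersemigroup h ->
  forall (a b : M) (al be : G) (mu nu de : M -> R),
    is_fuzzy mu -> is_fuzzy nu -> is_fuzzy de ->
    (el_fz h a al (el_fz h b be mu) = fz_fz h (h a al b) be mu /\
        el_fz h a al (fz_el h mu be b) = fz_el h (el_fz h a al mu) be b /\
        fz_fz h mu al (h a be b) = fz_el h (fz_el h mu al a) be b /\
        fz_fz h mu al (el_fz h a be nu) = fz_fz h (fz_el h mu al a) be nu /\
        el_fz h a al (fz_fz h mu be nu) = fz_fz h (el_fz h a al mu) be nu /\
        fz_fz h mu al (fz_el h nu be a) = fz_el h (fz_fz h mu al nu) be a /\
        fz_fz h mu al (fz_fz h nu be de) = fz_fz h (fz_fz h mu al nu) be de).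
Proof.
move=> Hsg a b al be mu nu de Hmu Hnu Hde.
have hf : forall a g b x, 0 <= h a g b x <= 1 by move=> a' g b' x; case: Hsg => H _; exact: H.
split; first by eapply p1; eassumption.
split; first by eapply p2; eassumption.
split; first by eapply p3; eassumption.
split; first by eapply p4; eassumption.
split; first by eapply p5; eassumption.
split; first by eapply p6; eassumption.
by eapply p7; eassumption.
Qed.
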